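(* Let $S$ be an entropy function for a finite set $X$. Given a function $\mu:2^X\to[0,\infty)$, there exist subsets $A_1\subset\cdots\subset A_m$ of $X$ and a function $\mu':2^X\to[0,\infty)$ supported on $\{A_1,\dots,A_m\}$ such that $\phi_{\mu'}=\phi_\mu$ and \[\sum_{i=1}^m\mu'(A_i)S(A_i)\le\sum_{A\subseteq X}\mu(A)S(A).\]
   Context: An entropy function for a finite set $X$ is a function $S:2^X\to[0,\infty)$ with $S(\emptyset)=0$, $S(A)+S(B)\ge S(A\cap B)+S(A\cup B)$ and $S(A)+S(B)\ge S(A\setminus B)+S(B\setminus A)$ for all $A,B\subseteq X$. For $\mu:2^X\to\mathbb R$, $\phi_\mu:X\to\mathbb R$ is defined by $\phi_\mu(x):=\sum_{A\ni x}\mu(A)$. *)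

(* Defs.v *)
From HB Require Import structures.
From mathcomp Require Import all_boot all_order all_algebra.
Set Implicit Arguments. Unset Strict Implicit. Unset Printing Implicit Defensive.
Import Order.TTheory GRing.Theory Num.Theory.
Local Open Scope ring_scope.

Definition entropy_function (R : realFieldType) (X : finType) (S : {set X} -> R) : Prop :=
  [/\ (forall A, 0 <= S A),
      S set0 = 0,
      (forall A B, S (A :&: B) + S (A :|: B) <= S A + S B) &
      (forall A B, S (A :\: B) + S (B :\: A) <= S A + S B)].

Definition phi (R : realFieldType) (X : finType) (mu : {set X} -> R) (x : X) : R :=
  \sum_(A : {set X} | x \in A) mu A.

(* Main.v *)
Require Import Defs.
From HB Require Import structures.
From mathcomp Require Import all_boot all_order all_algebra.
From mathcomp Require Import zify lra.
Import Order.TTheory GRing.Theory Num.Theory.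
Local Open Scope ring_scope.

Theorem lemma31 (R : realFieldType) (X : finType) (S : {set X} -> R)
  (HS : entropy_function S) (mu : {set X} -> R) (Hmu : forall A, 0 <= mu A) :
  exists (m : nat) (A : 'I_m -> {set X}) (mu' : {set X} -> R),
    [/\ (forall i j : 'I_m, (i < j)%N -> A i \proper A j),
        (forall B, 0 <= mu' B),
        (forall B, mu' B != 0 -> exists i, B = A i),
        (forall x, phi mu' x = phi mu x) &
        \sum_(i < m) mu' (A i) * S (A i) <= \sum_(B : {set X}) mu B * S B].
Proof.
move: HS => [S0 Sset0 Ssub _].
pose ph := phi mu.
have ph0 : forall x, 0 <= ph x by move=> x; apply: sumr_ge0 => B _.
pose r := fun a b : X => ph b <= ph a.
have r_tot : total r by move=> a b; rewrite /r le_total.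
have r_tr : transitive r by move=> a b c hab hbc; rewrite /r (le_trans hbc hab).
pose s := sort r (enum X).
have s_uniq : uniq s by rewrite sort_uniq enum_uniq.
have mem_s : forall x, x \in s by move=> x; rewrite mem_sort mem_enum.
pose n := #|X|.
have size_s : size s = n by rewrite size_sort /n cardE.
have s_sorted : sorted r s := sort_sorted r_tot _.
pose P k := [set x | (index x s < k)%N].
have PE : forall x k, (x \in P k) = (index x s < k)%N by move=> x k; rewrite inE.
pose f k := oapp ph 0 (nth None [seq Some z | z <- s] k).
pose d k := f k - f k.+1.
pose y x := S (P (index x s).+1) - S (P (index x s)).
pose mu' B := \sum_(k < n | B == P k.+1) d k.
have idx_lt : forall x, (index x s < n)%N by move=> x; rewrite -size_s index_mem.
have idx_inj : forall x z, index x s = index z s -> x = z.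
  by move=> x z h; rewrite -(nth_index x (mem_s x)) h nth_index.
have fE : forall k x0, (k < n)%N -> f k = ph (nth x0 s k).
  by move=> k x0 hk; rewrite /f (nth_map x0) ?size_s.
have fge : forall k, (n <= k)%N -> f k = 0.
  by move=> k hk; rewrite /f nth_default // size_map size_s.
have f_idx : forall x, f (index x s) = ph x.
  by move=> x; rewrite (fE _ x (idx_lt x)) nth_index.
have f0 : forall k, 0 <= f k by move=> k; rewrite /f; case: nth => //=.
have nth_idx : forall x0 k, (k < n)%N -> index (nth x0 s k) s = k.
  by move=> x0 k hk; rewrite index_uniq ?size_s.
have d0 : forall k, 0 <= d k.
  move=> k; rewrite /d; case: (ltnP k.+1 n) => h; last by rewrite (fge _ h) subr0.
  have : (0 < #|X|)%N by rewrite -/n; lia.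
  move/card_gt0P => [x0 _].
  rewrite (fE _ x0 (ltnW h)) (fE _ x0 h) subr_ge0.
  apply: (sorted_ltn_nth r_tr x0 s_sorted); rewrite ?inE ?size_s //; lia.
have gen : forall m j, (j <= m)%N -> \sum_(k < m | (j <= k)%N) d k = f j - f m.
  elim=> [|m IH] j hj.
    by rewrite big_ord0; move: hj; rewrite leqn0 => /eqP ->; rewrite subrr.
  case: (ltnP m j) => hjm.
    have -> : j = m.+1 by lia.
    by rewrite big1 ?subrr // => k; rewrite leqNgt ltn_ord.
  rewrite big_mkcond big_ord_recr /= -big_mkcond /= IH // hjm.
  by rewrite /d addrA subrK.
have tele : forall x, \sum_(k < n | x \in P k.+1) d k = ph x.
  move=> x; rewrite (eq_bigl (fun k : 'I_n => (index x s <= k)%N)); last first.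
    by move=> k; rewrite PE ltnS.
  by rewrite gen ?f_idx ?fge ?subr0 // ltnW.
have Pkey : forall a b, (a < n)%N -> P a.+1 = P b.+1 -> (a <= b)%N.
  move=> a b ha h.
  have : (0 < #|X|)%N by rewrite -/n; lia.
  move/card_gt0P => [x0 _].
  have : nth x0 s a \in P a.+1 by rewrite PE nth_idx.
  by rewrite h PE nth_idx.
have mu'P : forall i : 'I_n, mu' (P i.+1) = d i.
  move=> i; rewrite /mu' (big_pred1 i) // => k /=.
  apply/eqP/eqP => [h|->//]; apply: val_inj => /=.
  by apply/anti_leq; rewrite (Pkey _ _ (ltn_ord k) (esym h)) (Pkey _ _ (ltn_ord i) h).
have yle : forall A : {set X}, \sum_(x in A) y x <= S A.
  have : forall m (A : {set X}), (#|A| <= m)%N -> \sum_(x in A) y x <= S A; last first.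
    by move=> H A; apply: (H #|A|).
  elim=> [|m IH] A hA.
    move: hA; rewrite leqn0 cards_eq0 => /eqP ->.
    by rewrite big_set0 Sset0.
  case: (set_0Vmem A) => [->|[z0 z0A]]; first by rewrite big_set0 Sset0.
  case: (arg_maxnP (fun z => index z s) z0A) => z zA zmax; have {}zA : z \in A := zA; have hmax : forall x, x \in A -> (index x s <= index z s)%N := fun x h => zmax x h.
  rewrite (bigD1 z) //=.
  rewrite (eq_bigl (fun x => x \in A :\ z)); last by move=> x; rewrite !inE andbC.
  have hc : (#|A :\ z| <= m)%N by move: hA; rewrite (cardsD1 z A) zA; lia.
  have IHz := IH _ hc.
  have e1 : A :&: P (index z s) = A :\ z.
    apply/setP => x; rewrite !inE.
    case xA: (x \in A); rewrite ?andbF ?andbT //=.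
    have hle : (index x s <= index z s)%N := zmax x xA.
    case: (eqVneq x z) => [->|nxz]; first by rewrite ltnn.
    rewrite ltn_neqAle hle andbT; apply/negP => /eqP /idx_inj xz.
    by rewrite xz eqxx in nxz.
  have e2 : A :|: P (index z s) = P (index z s).+1.
    apply/setP => x; rewrite !inE.
    case xA: (x \in A) => /=; first by rewrite ltnS hmax.
    rewrite ltnS [in RHS]leq_eqVlt; case: (eqVneq (index x s) (index z s)) => [e|_] //; have xz := idx_inj _ _ e.
    by rewrite xz zA in xA.
  have := Ssub A (P (index z s)); rewrite e1 e2 /y => h.
  lra.
have yP : forall k, (k <= n)%N -> \sum_(x in P k) y x = S (P k).
  elim=> [|k IH] hk.
    have -> : P 0%N = set0 by apply/setP => x; rewrite !inE.
    by rewrite big_set0 Sset0.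
  have : (0 < #|X|)%N by rewrite -/n; lia.
  move/card_gt0P => [x0 _].
  have hz := nth_idx x0 k hk.
  rewrite (bigD1 (nth x0 s k)) /=; last by rewrite PE hz.
  rewrite (eq_bigl (fun x => x \in P k)); last first.
    move=> x; rewrite !PE.
    case: (eqVneq x (nth x0 s k)) => [->|nx]; first by rewrite hz ltnn andbF.
    have hne : index x s != k.
      apply/eqP => e; move: nx; rewrite -hz in e.
      by rewrite (idx_inj _ _ e) eqxx.
    by rewrite andbT ltnS [in RHS]ltn_neqAle hne.
  by rewrite IH ?(ltnW hk) // /y hz subrK.
exists n, (fun i : 'I_n => P i.+1), mu'; split.
- move=> i j hij; apply/properP; split.
    by apply/subsetP => x; rewrite !PE; lia.
  have : (0 < #|X|)%N by have := ltn_ord j; rewrite -/n; lia.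
  move/card_gt0P => [x0 _].
  by exists (nth x0 s j); rewrite PE nth_idx //; lia.
- by move=> B; apply: sumr_ge0 => k _.
- move=> B; case: (pickP (fun k : 'I_n => B == P k.+1)) => [k /eqP -> _|h].
    by exists k.
  by rewrite /mu' big_pred0 ?eqxx.
- move=> x; rewrite -/ph -tele /phi /mu' (exchange_big_dep xpredT) //=.
  rewrite [RHS]big_mkcond /=; apply: eq_bigr => k _.
  case: (boolP (x \in P k.+1)) => hx.
    rewrite (big_pred1 (P k.+1)) // => B /=.
    by case: eqP => [->|]; rewrite ?hx ?andbF.
  by rewrite big_pred0 // => B; case: eqP => [->|]; rewrite ?andbF ?(negbTE hx).
- rewrite (eq_bigr (fun i : 'I_n => d i * \sum_(x in P i.+1) y x)); last first.
    by move=> i _; rewrite mu'P yP.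
  under eq_bigr do rewrite mulr_sumr.
  rewrite (exchange_big_dep xpredT) //=.
  under eq_bigr do rewrite -mulr_suml tele.
  rewrite /ph /phi.
  under eq_bigr do rewrite mulr_suml.
  rewrite (exchange_big_dep xpredT) //=.
  apply: ler_sum => B _.
  rewrite -mulr_sumr; apply: ler_wpM2l => //.
Qed.
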